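(* Let $p\colon E\to B$ be an arc-hedgehog covering with $E$ a Peano space, and let $b_0\in B$ be a point having a countable basis of neighborhoods in $B$. Then the fiber $F=p^{-1}(b_0)$ (with the subspace topology) is a Baire space.
   Context: All maps are continuous. A Peano space is a connected, locally path-connected space. For a class $\mathcal{P}$ of spaces, $p\colon E\to B$ is a $\mathcal{P}$-covering if for every $e_0\in E$, $X\in\mathcal{P}$, $x_0\in X$ and map $f\colon X\to B$ with $f(x_0)=p(e_0)$ there is a unique map $g\colon X\to E$ with $p\circ g=f$, $g(x_0)=e_0$. A directed wedge is $(Z,z_0)=\bigvee_{s\in S}(Z_s,z_s)$, a wedge of pointed Peano spaces indexed by a directed set $S$, topologized so that $U\subset Z\setminus\{z_0\}$ is open iff each $U\cap Z_s$ is open, and $U\ni z_0$ is an open neighborhood of $z_0$ iff each $U\cap Z_s$ is open and there is $t\in S$ with $Z_s\subset U$ for all $s>t$. An arc-hedgehog is a directed wedge with each $(Z_s,z_s)\cong([0,1],0)$; an arc-hedgehog covering is a $\mathcal{P}$-covering for $\mathcal{P}$ the class of all arc-hedgehogs. *)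

(* Defs.v *)
From HB Require Import structures.
From mathcomp Require Import all_boot all_order all_algebra.
From mathcomp Require Import all_classical all_reals.
From mathcomp Require Import topology normedtype.
From mathcomp Require Import Rstruct Rstruct_topology.
Set Implicit Arguments. Unset Strict Implicit. Unset Printing Implicit Defensive.
Import Order.TTheory GRing.Theory Num.Theory.
Local Open Scope classical_set_scope.
Local Open Scope ring_scope.

Notation RR := Rdefinitions.R.

Definition unitI : set RR := [set x | 0 <= x <= 1].

Definition path_in (T : topologicalType) (A : set T) (x y : T) :=
  exists g : RR -> T, {within unitI, continuous g} /\ g 0 = x /\ g 1 = y /\
    (forall t, unitI t -> A (g t)).

Definition path_connected (T : topologicalType) (A : set T) :=
  forall x y, A x -> A y -> path_in A x y.

Definition locally_path_connected (T : topologicalType) :=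
  forall (x : T) (U : set T), nbhs x U ->
    exists V : set T, [/\ open V, V x, V `<=` U & path_connected V].

Definition peano_space (T : topologicalType) :=
  connected [set: T] /\ locally_path_connected T.

Definition directed_set (S : Type) (le : S -> S -> Prop) :=
  [/\ inhabited S, (forall s, le s s), (forall s t u, le s t -> le t u -> le s u)
    & (forall s t, exists u, le s u /\ le t u)].

Definition slt (S : Type) (le : S -> S -> Prop) (t s : S) := le t s /\ ~ le s t.

(* Carrier of the arc-hedgehog (wedge of copies Z_s = [0,1] glued at 0):
   None is the wedge point z0, Some (s, x) with 0 < x <= 1 is the point x of
   the arc Z_s. *)
Definition hhpt : Type := {x : RR | 0 < x <= 1}.
Definition hedgehog (S : Type) : Type := option (S * hhpt).

(* the point x \in [0,1] of the s-th arc (x = 0 gives the wedge point) *)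
Definition hpt (S : Type) (s : S) (x : RR) : hedgehog S :=
  omap (fun y : hhpt => (s, y)) (insub x).

Definition open_in_unitI (A : set RR) :=
  exists2 O : set RR, open O & A = O `&` unitI.

Definition hh_open (S : Type) (le : S -> S -> Prop) (U : set (hedgehog S)) :=
  (forall s, open_in_unitI [set x | unitI x /\ U (hpt s x)]) /\
  (U None -> exists t : S, forall s, slt le t s ->
                forall x, unitI x -> U (hpt s x)).

Definition hh_continuous (S : Type) (le : S -> S -> Prop) (T : topologicalType)
  (f : hedgehog S -> T) :=
  forall V : set T, open V -> hh_open le (f @^-1` V).

Definition arc_hedgehog_covering (E B : topologicalType) (p : E -> B) :=
  forall (e0 : E) (S : Type) (le : S -> S -> Prop), directed_set le ->
  forall (x0 : hedgehog S) (f : hedgehog S -> B),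
    hh_continuous le f -> f x0 = p e0 ->
    exists g : hedgehog S -> E,
      [/\ hh_continuous le g, p \o g = f, g x0 = e0 &
          forall g' : hedgehog S -> E,
            hh_continuous le g' -> p \o g' = f -> g' x0 = e0 -> g' = g].

Definition countable_nbhs_basis (T : topologicalType) (b : T) :=
  exists V : nat -> set T, (forall n, nbhs b (V n)) /\
    (forall W, nbhs b W -> exists n, V n `<=` W).

Definition dense_in (T : topologicalType) (F A : set T) :=
  forall O : set T, open O -> O `&` F !=set0 -> O `&` A !=set0.

(* F with the subspace topology is a Baire space: any countable family of
   relatively open (U n `&` F, U n open in T) dense subsets of F has dense
   intersection *)
Definition baire_subspace (T : topologicalType) (F : set T) :=
  forall U : nat -> set T, (forall n, open (U n)) ->
    (forall n, dense_in F (U n `&` F)) ->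
    dense_in F (\bigcap_n (U n `&` F)).

(* Main.v *)
Require Import Defs.
From HB Require Import structures.
From mathcomp Require Import all_boot all_order all_algebra.
From mathcomp Require Import all_classical all_reals.
From mathcomp Require Import topology normedtype.
From mathcomp Require Import Rstruct Rstruct_topology.
From mathcomp Require Import ring lra.
Set Implicit Arguments. Unset Strict Implicit. Unset Printing Implicit Defensive.
Import Order.TTheory GRing.Theory Num.Theory.
Local Open Scope classical_set_scope.
Local Open Scope ring_scope.
Lemma nbhsRP (x : RR) (P : set RR) :
  nbhs x P <-> exists2 e : RR, 0 < e & forall y, `|y - x| < e -> P y.
Proof.
rewrite nbhs_ballP; split => -[e e0 H]; exists e => // y.
  by move=> h; apply: H; rewrite /ball /= distrC.
by rewrite /ball /= distrC; apply: H.
Qed.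

Lemma openRP (O : set RR) :
  (forall y, O y -> exists2 e : RR, 0 < e & forall z, `|z - y| < e -> O z) -> open O.
Proof. by move=> H; rewrite openE => y /H /nbhsRP. Qed.

Definition locP {T : topologicalType} (a : RR -> T) :=
  forall x, unitI x -> forall V, open V -> V (a x) ->
  exists2 e : RR, 0 < e & forall y, unitI y -> `|y - x| < e -> V (a y).

Lemma loc_open {T : topologicalType} (a : RR -> T) : locP a ->
  forall V, open V -> open_in_unitI [set x | unitI x /\ V (a x)].
Proof.
move=> la V oV.
exists [set y | exists x e, [/\ unitI x, 0 < e, `|y - x| < e &
    forall z, unitI z -> `|z - x| < e -> V (a z)]].
  apply: openRP => y [x [e [ux e0 yx H]]].
  exists (e - `|y - x|); first by rewrite subr_gt0.
  move=> z zy; exists x, e; split => //.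
  have := ler_distD y z x.
  move: zy; lra.
apply/seteqP; split => [x [ux Vx]|y [[x [e [ux e0 yx H]]] uy]].
  have [e e0 H] := la x ux V oV Vx.
  split => //; exists x, e; split => //; by rewrite subrr normr0.
by split => //; apply: H.
Qed.

Lemma open_loc {T : topologicalType} (a : RR -> T) :
  (forall V, open V -> open_in_unitI [set x | unitI x /\ V (a x)]) -> locP a.
Proof.
move=> H x ux V oV Vx.
have [O oO E] := H V oV.
have : O x.
  have : [set x | unitI x /\ V (a x)] x by [].
  by rewrite E => -[].
move=> Ox.
have : nbhs x O by move: oO; rewrite openE; apply.
move=> /nbhsRP [e e0 He]; exists e => // y uy yx.
have : (O `&` unitI) y by split => //; apply: He.
by rewrite -E => -[].
Qed.
Definition hmap {T : Type} {S : Type} (c : T) (a : S -> RR -> T) : hedgehog S -> T :=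
  fun o => match o with None => c | Some (s, y) => a s (val y) end.

Lemma unitI_val (y : hhpt) : unitI (val y).
Proof. by case: y => y /= /andP [y0 y1]; rewrite /unitI /= y1 ltW. Qed.

Lemma hpt0 S (s : S) : hpt s 0 = None.
Proof. by rewrite /hpt insubF //= ltxx. Qed.

Lemma hmap_hpt {T S : Type} (c : T) (a : S -> RR -> T) s x :
  unitI x -> a s 0 = c -> hmap c a (hpt s x) = a s x.
Proof.
move=> ux a0; rewrite /hpt; case: insubP => [y _ <-|nP] //=.
move: ux nP; rewrite /unitI /= => /andP [x0 x1]; rewrite x1 andbT -leNgt => x0'.
by have -> : x = 0 by apply/eqP; rewrite eq_le x0 x0'.
Qed.

Lemma hmap_cont {T : topologicalType} S (le : S -> S -> Prop) (c : T) a :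
  (forall s, locP (a s)) -> (forall s, a s 0 = c) ->
  (forall V, open V -> V c -> exists t, forall s, slt le t s ->
      forall x, unitI x -> V (a s x)) ->
  hh_continuous le (hmap c a).
Proof.
move=> la a0 hc V oV; split.
  move=> s.
  have -> : [set x | unitI x /\ (hmap c a @^-1` V) (hpt s x)] =
            [set x | unitI x /\ V (a s x)].
    by apply/seteqP; split => x [ux Vx]; split => //; move: Vx;
      rewrite /= hmap_hpt.
  exact: loc_open.
move=> /= Vc; have [t Ht] := hc V oV Vc; exists t => s st x ux.
by rewrite /= hmap_hpt //; apply: Ht.
Qed.

Lemma hrestr {T : topologicalType} S (le : S -> S -> Prop) (g : hedgehog S -> T) s :
  hh_continuous le g -> locP (fun x => g (hpt s x)).
Proof. by move=> hg; apply: open_loc => V oV; exact: ((hg V oV).1 s). Qed.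

Definition ule : unit -> unit -> Prop := fun _ _ => True.

Lemma ule_dir : directed_set ule.
Proof. split; [exact: (inhabits tt) | by [] | by [] | by move=> s t; exists tt]. Qed.

Section Lifting.
Variables (E B : topologicalType) (p : E -> B).
Hypothesis cover : arc_hedgehog_covering p.

Lemma hmap_unit_cont {T : topologicalType} (a : RR -> T) :
  locP a -> hh_continuous ule (hmap (a 0) (fun _ : unit => a)).
Proof.
move=> la; apply: hmap_cont => // V oV Vc; exists tt => s [_ []] //.
Qed.

Lemma lift_exists (a : RR -> B) (e : E) : locP a -> a 0 = p e ->
  exists l : RR -> E, [/\ locP l, l 0 = e & forall x, unitI x -> p (l x) = a x].
Proof.
move=> la a0.
have [g [gc pg g0 _]] := @cover e unit ule ule_dir None _ (hmap_unit_cont la) a0.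
exists (fun x => g (hpt tt x)); split.
- exact: hrestr gc.
- by rewrite hpt0.
- move=> x ux; have := congr1 (fun h => h (hpt tt x)) pg.
  by rewrite /= hmap_hpt.
Qed.

Lemma lift_unique (a : RR -> B) (l1 l2 : RR -> E) (e : E) :
  locP a -> locP l1 -> locP l2 -> l1 0 = e -> l2 0 = e ->
  (forall x, unitI x -> p (l1 x) = a x) ->
  (forall x, unitI x -> p (l2 x) = a x) ->
  forall x, unitI x -> l1 x = l2 x.
Proof.
move=> la ll1 ll2 l10 l20 pl1 pl2.
have u0 : unitI 0 by rewrite /unitI /= lexx ler01.
have a0 : a 0 = p e by rewrite -(pl1 0 u0) l10.
have [g [gc pg g0 gu]] := @cover e unit ule ule_dir None _ (hmap_unit_cont la) a0.
have G (l : RR -> E) : locP l -> l 0 = e -> (forall x, unitI x -> p (l x) = a x) ->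
    hmap e (fun _ : unit => l) = g.
  move=> ll l0 pl; apply: gu => //.
  - by rewrite -l0; apply: hmap_unit_cont.
  - apply: funext => -[[s y]|] /=; first by apply: pl; exact: unitI_val.
    by rewrite -a0.
have G1 := G l1 ll1 l10 pl1; have G2 := G l2 ll2 l20 pl2.
move=> x ux.
have := congr1 (fun h => h (hpt tt x)) (etrans G1 (esym G2)).
by rewrite /= !hmap_hpt.
Qed.
End Lifting.

Definition locAt {T : topologicalType} (a : RR -> T) (x : RR) :=
  forall V, open V -> V (a x) ->
  exists2 e : RR, 0 < e & forall y, unitI y -> `|y - x| < e -> V (a y).

Lemma unitIP (x : RR) : unitI x <-> 0 <= x /\ x <= 1.
Proof. by rewrite /unitI /=; split => [/andP[]|[-> ->]]. Qed.

Lemma normlt (u e : RR) : (`|u| < e) <-> (- e < u /\ u < e).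
Proof. by rewrite ltr_norml; split => [/andP[]|[-> ->]]. Qed.

Section Concat.
Variables (B : topologicalType) (b0 : B) (g : nat -> RR -> B).
Hypothesis gl : forall k, locP (g k).
Hypothesis g0 : forall k, g k 0 = b0.
Hypothesis g1 : forall k, g k 1 = b0.

Fixpoint D (n f : nat) (t : RR) : B :=
  match f with 0 => b0 | f.+1 => if t <= 2^-1 then g n (2 * t) else D n.+1 f (2 * t - 1) end.

Fixpoint reach (f : nat) (t : RR) : Prop :=
  match f with 0 => t <= 2^-1 | f.+1 => t <= 2^-1 \/ reach f (2 * t - 1) end.

Lemma Dstab f : forall n t, reach f t -> forall f', (f <= f')%N -> D n f'.+1 t = D n f.+1 t.
Proof.
elim: f => [|f IH] n t.
  by move=> /= ht [|f'] _ /=; rewrite ht.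
move=> r [//|f'] lf /=; case: ifP => // ht.
case: r => [h|r]; first by rewrite h in ht.
exact: IH.
Qed.

Lemma Dstab2 f f' n t : reach f t -> reach f' t -> D n f.+1 t = D n f'.+1 t.
Proof.
move=> r r'; case: (leqP f f') => h; first by rewrite (Dstab n r h).
by rewrite (Dstab n r' (ltnW h)).
Qed.

Lemma notreach f : forall t, ~ reach f t -> (f%:R + 2) * (1 - t) < 1.
Proof.
elim: f => [|f IH] t /=; first by rewrite add0r; move/negP; rewrite -ltNge; lra.
move=> /not_orP [h1 h2]; have := IH _ h2; move/negP: h1; rewrite -ltNge => h1.
rewrite -natr1.
have [t1|t1] := leP t 1; last by nra.
have : 0 <= f%:R :> RR by [].
nra.
Qed.

Lemma reach_ex t : t < 1 -> exists f, reach f t.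
Proof.
move=> t1; apply: contrapT => hn.
set f := Num.trunc ((1 - t)^-1).
have hf : (1 - t)^-1 < f.+1%:R by apply: truncnS_gt.
have := notreach (f := f) (t := t) (fun r => hn (ex_intro _ f r)).
have t0 : 0 < 1 - t by rewrite subr_gt0.
have : 1 < f.+1%:R * (1 - t).
  by rewrite -ltr_pdivrMr // div1r.
rewrite -natr1; lra.
Qed.

Definition Kf (t : RR) : nat :=
  match pselect (exists f, reach f t) with
  | left h => proj1_sig (cid h) | right _ => 0%N end.

Definition delta (n : nat) (t : RR) : B := D n (Kf t).+1 t.

Lemma delta_D n t f : reach f t -> delta n t = D n f.+1 t.
Proof.
move=> r; rewrite /delta /Kf; case: pselect => [h|h]; last by case: h; exists f.
by case: cid => k /= rk; apply: Dstab2.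
Qed.

Lemma D1 f : forall n, D n f 1 = b0.
Proof.
elim: f => [//|f IH] n /=; rewrite ifF; last by apply/negbTE; rewrite -ltNge; lra.
by rewrite mulr1 (_ : 2 - 1 = 1 :> RR) ?IH //; lra.
Qed.

Lemma delta1 n : delta n 1 = b0.
Proof. exact: D1. Qed.

Lemma deltaE n y : unitI y ->
  delta n y = if y <= 2^-1 then g n (2 * y) else delta n.+1 (2 * y - 1).
Proof.
move=> /unitIP [y0 y1].
have [->|yl] := eqVneq y 1.
  rewrite delta1 ifF; first by rewrite (_ : 2 * 1 - 1 = 1 :> RR) ?delta1 //; lra.
  by apply/negbTE; rewrite -ltNge; lra.
have : y < 1 by rewrite lt_neqAle yl.
move=> /reach_ex [f r]; rewrite (delta_D n r) /=.
case: ifP => // hy.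
case: f r => [/= r|f [r|r]]; first by rewrite r in hy.
  by rewrite r in hy.
by rewrite (delta_D _ r).
Qed.

Lemma delta0 n : delta n 0 = b0.
Proof.
rewrite deltaE; last by apply/unitIP; lra.
by rewrite ifT ?mulr0 ?g0 //; lra.
Qed.

Lemma delta_img (A : set B) N : A b0 ->
  (forall k, (N <= k)%N -> forall y, unitI y -> A (g k y)) ->
  forall y, unitI y -> A (delta N y).
Proof.
move=> Ab hg y uy; rewrite /delta.
suff : forall f n y, (N <= n)%N -> unitI y -> A (D n f y) by apply.
elim=> [//|f IH] n t Nn /unitIP [t0 t1] /=.
case: ifP => ht.
  by apply: hg => //; apply/unitIP; lra.
apply: IH; first exact: leqW.
by move/negbT: ht; rewrite -ltNge => ht; apply/unitIP; lra.
Qed.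

Lemma delta_half n x : unitI x -> delta n (x / 2) = g n x.
Proof.
move=> /unitIP [x0 x1]; rewrite deltaE; last by apply/unitIP; lra.
rewrite ifT; last by lra.
by congr (g n _); lra.
Qed.

Lemma delta_half2 n x : unitI x -> delta n ((x + 1) / 2) = delta n.+1 x.
Proof.
move=> /unitIP [x0 x1]; rewrite deltaE; last by apply/unitIP; lra.
case: ifP => h.
  have -> : x = 0 by lra.
  rewrite delta0 (_ : 2 * ((0 + 1) / 2) = 1 :> RR) ?g1 //; lra.
by rewrite (_ : 2 * ((x + 1) / 2) - 1 = x) //; lra.
Qed.

Lemma loc_lthalf n x : unitI x -> x < 2^-1 -> locAt (delta n) x.
Proof.
move=> ux xh V oV; rewrite deltaE // ifT; last exact: ltW.
move: ux => /unitIP [x0 x1] Vx.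
have [e e0 He] := @gl n (2 * x) ltac:(apply/unitIP; lra) V oV Vx.
exists (Num.min (e / 2) (2^-1 - x)).
  by rewrite lt_min; apply/andP; split; lra.
move=> y /[dup] uy /unitIP [y0 y1].
rewrite lt_min => /andP [h1 h2]; move/normlt: h1 => h1.
move/normlt: h2 => h2.
rewrite deltaE // ifT; last by lra.
apply: He; first by apply/unitIP; lra.
by apply/normlt; lra.
Qed.

Lemma loc_half n : locAt (delta n) (2^-1).
Proof.
move=> V oV; rewrite deltaE; last by apply/unitIP; lra.
rewrite ifT // (_ : 2 * 2^-1 = 1 :> RR); last by lra.
move=> Vx.
have [e1 e10 H1] := @gl n 1 ltac:(apply/unitIP; lra) V oV Vx.
have u0 : unitI 0 by apply/unitIP; lra.
have [e2 e20 H2] := loc_lthalf (n := n.+1) u0 ltac:(lra) oV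
  ltac:(by rewrite delta0 -(g1 n)).
exists (Num.min (e1 / 2) (e2 / 2)).
  by rewrite lt_min; apply/andP; split; lra.
move=> y /[dup] uy /unitIP [y0 y1].
rewrite lt_min => /andP [h1 h2]; move/normlt: h1 => h1.
move/normlt: h2 => h2.
rewrite deltaE //; case: ifP => hy.
  by apply: H1; [apply/unitIP; lra | apply/normlt; lra].
move/negbT: hy; rewrite -ltNge => hy.
by apply: H2; [apply/unitIP; lra | apply/normlt; lra].
Qed.

Lemma loc_lehalf n x : unitI x -> x <= 2^-1 -> locAt (delta n) x.
Proof.
move=> ux; rewrite le_eqVlt => /orP [/eqP ->|h]; first exact: loc_half.
exact: loc_lthalf.
Qed.

Lemma loc_reach f : forall n x, reach f x -> unitI x -> locAt (delta n) x.
Proof.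
elim: f => [|f IH] n x /=; first by move=> h ux; exact: loc_lehalf.
move=> [h|r] ux; first exact: loc_lehalf.
have [h|h] := leP x (2^-1); first exact: loc_lehalf.
move: (ux) => /unitIP [x0 x1].
move=> V oV; rewrite deltaE // ifF; last by apply/negbTE; rewrite -ltNge.
move=> Vx.
have [e e0 He] := IH n.+1 _ r ltac:(apply/unitIP; lra) V oV Vx.
exists (Num.min (e / 2) (x - 2^-1)).
  by rewrite lt_min; apply/andP; split; lra.
move=> y /[dup] uy /unitIP [y0 y1].
rewrite lt_min => /andP [h1 h2]; move/normlt: h1 => h1.
move/normlt: h2 => h2.
rewrite deltaE // ifF; last by apply/negbTE; rewrite -ltNge; lra.
by apply: He; [apply/unitIP; lra | apply/normlt; lra].
Qed.

Lemma delta_tail j : forall n y, unitI y -> 2 ^+ j * (1 - y) <= 1 ->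
  exists2 z, unitI z & delta n y = delta (n + j) z.
Proof.
elim: j => [|j IH] n y uy.
  by move=> _; exists y => //; rewrite addn0.
move: (uy) => /unitIP [y0 y1].
rewrite exprS => h.
have hj : 1 <= 2 ^+ j :> RR by apply: exprn_ege1; lra.
have hy : 2^-1 <= y by nra.
have [e|ne] := eqVneq y (2^-1).
  exists 1; first by apply/unitIP; lra.
  rewrite delta1 deltaE // ifT; last by rewrite e.
  by rewrite e (_ : 2 * 2^-1 = 1 :> RR) ?g1 //; lra.
have hy' : 2^-1 < y by rewrite lt_neqAle eq_sym ne hy.
rewrite deltaE // ifF; last by apply/negbTE; rewrite -ltNge.
have [z uz ->] := IH n.+1 (2 * y - 1) ltac:(apply/unitIP; lra) ltac:(nra).
by exists z => //; rewrite addSnnS.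
Qed.

Hypothesis shrink : forall V, open V -> V b0 ->
  exists j, forall k, (j <= k)%N -> forall y, unitI y -> V (g k y).

Lemma loc_one n : locAt (delta n) 1.
Proof.
move=> V oV; rewrite delta1 => Vb.
have [j Hj] := shrink oV Vb.
have img := delta_img (N := (n + j)%N) Vb
  (fun k hk => Hj k (leq_trans (leq_addl n j) hk)).
have P0 : 0 < 2 ^+ j :> RR by apply: exprn_gt0; lra.
exists (2 ^+ j)^-1; first by rewrite invr_gt0.
move=> y uy /normlt [h1 h2].
have : 2 ^+ j * (1 - y) < 2 ^+ j * (2 ^+ j)^-1.
  by rewrite ltr_pM2l //; lra.
rewrite mulfV; last by rewrite gt_eqF.
move=> h; have [z uz ->] := @delta_tail j n y uy (ltW h).
exact: img.
Qed.

Lemma delta_loc n : locP (delta n).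
Proof.
move=> x ux; have [->|ne] := eqVneq x 1; first exact: loc_one.
move: (ux) => /unitIP [x0 x1].
have : x < 1 by rewrite lt_neqAle ne.
move=> /reach_ex [f r]; exact: loc_reach r ux.
Qed.
End Concat.

Lemma wc_loc {T : topologicalType} (a : RR -> T) :
  {within unitI, continuous a} -> locP a.
Proof.
move/subspace_continuousP => H x ux V oV Vx.
have := H x ux V (open_nbhs_nbhs (conj oV Vx)).
rewrite /= nbhs_simpl /within /= => /nbhsRP [e e0 He].
by exists e => // y uy yx; apply: He.
Qed.

Lemma comp_loc {T U : topologicalType} (q : T -> U) (l : RR -> T) :
  continuous q -> locP l -> locP (fun x => q (l x)).
Proof.
move=> /continuousP qc ll x ux V oV Vx.
exact: (ll x ux (q @^-1` V) (qc V oV) Vx).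
Qed.

Lemma reparam_loc {T : topologicalType} (l : RR -> T) (h : RR -> RR) :
  locP l -> (forall x, unitI x -> unitI (h x)) ->
  (forall x y e, `|y - x| < e -> `|h y - h x| < e) ->
  locP (fun x => l (h x)).
Proof.
move=> ll hu hl x ux V oV Vx.
have [e e0 He] := ll (h x) (hu x ux) V oV Vx.
by exists e => // y uy yx; apply: He; [apply: hu | apply: hl].
Qed.

Fixpoint Vdown {T : Type} (V : nat -> set T) (n : nat) : set T :=
  match n with 0 => V 0%N | k.+1 => Vdown V k `&` V k.+1 end.

Lemma Vdown_sub {T : Type} (V : nat -> set T) n : Vdown V n `<=` V n.
Proof. by case: n => [//|n] x []. Qed.

Lemma Vdown_mono {T : Type} (V : nat -> set T) n m : (n <= m)%N ->
  Vdown V m `<=` Vdown V n.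
Proof.
elim: m => [|m IH]; first by rewrite leqn0 => /eqP ->.
rewrite leq_eqVlt => /orP [/eqP ->//|h] x [xm _].
by apply: IH.
Qed.

Lemma Vdown_nbhs {T : topologicalType} (b : T) (V : nat -> set T) :
  (forall n, nbhs b (V n)) -> forall n, nbhs b (Vdown V n).
Proof. move=> H; elim=> [|n IH] /=; [exact: H | exact: (filterI IH (H n.+1))]. Qed.

Section Main.
Variables (E B : topologicalType) (p : E -> B) (b0 : B).
Hypothesis pc : continuous p.
Hypothesis cover : arc_hedgehog_covering p.
Variable V : nat -> set B.
Hypothesis Vn : forall n, nbhs b0 (V n).
Hypothesis Vb : forall W, nbhs b0 W -> exists n, V n `<=` W.

Definition small (e : E) (W : set E) (m : nat) :=
  forall (a : RR -> B) (l : RR -> E), locP a -> a 0 = b0 ->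
  (forall x, unitI x -> Vdown V m (a x)) ->
  locP l -> l 0 = e -> (forall x, unitI x -> p (l x) = a x) ->
  forall x, unitI x -> W (l x).

Lemma small_mono e W m m' : small e W m -> (m <= m')%N -> small e W m'.
Proof.
move=> s h a l la a0 aV; apply: s => // x ux.
exact: (@Vdown_mono _ V _ _ h _ (aV x ux)).
Qed.

Definition nle : nat -> nat -> Prop := fun m n => (m <= n)%N.

Lemma nle_dir : directed_set nle.
Proof.
split; [exact: (inhabits 0%N) | exact: leqnn | move=> s t u; exact: leq_trans |].
by move=> s t; exists (maxn s t); rewrite /nle leq_maxl leq_maxr.
Qed.

Lemma small_ex e W : p e = b0 -> open W -> W e -> exists m, small e W m.
Proof.
move=> Fe oW We; apply: contrapT => H.
have ex m : exists t : (RR -> B) * (RR -> E) * RR,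
    [/\ locP t.1.1 /\ t.1.1 0 = b0, (forall x, unitI x -> Vdown V m (t.1.1 x)),
     locP t.1.2, t.1.2 0 = e /\ (forall x, unitI x -> p (t.1.2 x) = t.1.1 x) &
     unitI t.2 /\ ~ W (t.1.2 t.2)].
  apply: contrapT => hn; apply: H; exists m => a l la a0 aV ll l0 pl x ux.
  apply: contrapT => nW; apply: hn; exists (a, l, x); by split.
have [T HT] := choice ex.
pose a m := (T m).1.1.
have la m : locP (a m) by case: (HT m) => -[].
have a0 m : a m 0 = b0 by case: (HT m) => -[].
have aV m x : unitI x -> Vdown V m (a m x) by case: (HT m) => _ H1 _ _ _; apply: H1.
have hc : hh_continuous nle (hmap b0 a).
  apply: hmap_cont => // V' oV' V'b.
  have [n Hn] := Vb (open_nbhs_nbhs (conj oV' V'b)).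
  exists n => s [ns _] x ux.
  by apply: Hn; apply: Vdown_sub; apply: (@Vdown_mono _ V _ _ ns); apply: aV.
have [g [gc pg g0 _]] := @cover e nat nle nle_dir None _ hc (esym Fe).
have [t Ht] := (gc W oW).2 ltac:(by rewrite /preimage /= g0).
have st : slt nle t t.+1 by split; rewrite /nle // ltnn.
case: (HT t.+1) => _ _ ll [l0 pl] [ux nW].
apply: nW.
have hr : locP (fun x => g (hpt t.+1 x)) by exact: hrestr gc.
have hr0 : (fun x => g (hpt t.+1 x)) 0 = e by rewrite /= hpt0.
have hrp : forall x, unitI x -> p ((fun x => g (hpt t.+1 x)) x) = a t.+1 x.
  move=> x ux'; have := congr1 (fun h => h (hpt t.+1 x)) pg.
  by rewrite /= hmap_hpt.
rewrite (lift_unique cover (la t.+1) ll hr l0 hr0 pl hrp ux).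
exact: Ht.
Qed.

Hypothesis peano : peano_space E.

Let F := p @^-1` [set b0].

Lemma step (O : set E) (U : nat -> set E) : open O -> (forall n, open (U n)) ->
  (forall n, dense_in F (U n `&` F)) ->
  forall k e m, p e = b0 -> (O `&` U k) e -> small e (O `&` U k) m ->
  exists t : E * nat * (RR -> E),
   [/\ p t.1.1 = b0 /\ (O `&` U k.+1) t.1.1 /\ small t.1.1 (O `&` U k.+1) t.1.2,
       (m < t.1.2)%N, locP t.2, t.2 0 = e /\ t.2 1 = t.1.1 &
       forall x, unitI x -> Vdown V m (p (t.2 x))].
Proof.
move=> oO oU dU k e m Fe [Oe Ue] se.
have := Vdown_nbhs Vn m; rewrite nbhsE => -[V' [oV' V'b] V'sub].
have oN : open (O `&` p @^-1` V') by apply: openI => //; exact: (proj1 (continuousP p) pc).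
have pe : (p @^-1` V') e by rewrite /preimage /= Fe.
have [P [oP Pe PN pP]] := peano.2 e _ (open_nbhs_nbhs (conj oN (conj Oe pe))).
have [e' [Pe' [Ue' Fe']]] := dU k.+1 P oP (ex_intro _ e (conj Pe Fe)).
have Oe' : O e' by have [] := PN e' Pe'.
have [b [bc [be [be' bP]]]] := pP e e' Pe Pe'.
have [m0 sm0] := small_ex Fe' (openI oO (oU k.+1)) (conj Oe' Ue').
exists (e', maxn m0 m.+1, b); split => //=.
- split => //; split => //; apply: small_mono sm0 _; exact: leq_maxl.
- by rewrite leq_max ltnSn orbT.
- exact: wc_loc.
- by move=> x ux; apply: V'sub; have [] := PN _ (bP x ux).
Qed.

Lemma main_baire (O : set E) (U : nat -> set E) : open O -> (forall n, open (U n)) ->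
  (forall n, dense_in F (U n `&` F)) ->
  O `&` F !=set0 -> O `&` \bigcap_n (U n `&` F) !=set0.
Proof.
move=> oO oU dU OF.
have [e0 [Oe0 [U0e0 Fe0]]] := dU 0%N O oO OF.
have [m0 sm0] := small_ex Fe0 (openI oO (oU 0%N)) (conj Oe0 U0e0).
pose Inv k (s : E * nat) := p s.1 = b0 /\ (O `&` U k) s.1 /\ small s.1 (O `&` U k) s.2.
pose Q k (s : E * nat) (t : E * nat * (RR -> E)) :=
   [/\ Inv k.+1 t.1, (s.2 < t.1.2)%N, locP t.2, t.2 0 = s.1 /\ t.2 1 = t.1.1 &
       forall x, unitI x -> Vdown V s.2 (p (t.2 x))].
have ex : forall ks : nat * (E * nat), exists t, Inv ks.1 ks.2 -> Q ks.1 ks.2 t.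
  move=> [k [e m]]; case: (pselect (Inv k (e, m))) => [[/= Fe [Oe se]]|nI].
    have [t Ht] := step oO oU dU Fe Oe se; exists t => _; exact: Ht.
  by exists (e, 0%N, fun _ => e) => h; case: nI.
have [stp Hst] := choice ex.
pose st := fix st k := match k with 0%N => (e0, m0) | k.+1 => (stp (k, st k)).1 end.
have Ist : forall k, Inv k (st k).
  elim=> [|k IH]; first by split.
  by have [] := Hst (k, st k) IH.
have Qk k : Q k (st k) (stp (k, st k)) := Hst (k, st k) (Ist k).
pose m k := (st k).2.
pose e k := (st k).1.
pose b k := (stp (k, st k)).2.
have mS k : (m k < m k.+1)%N by have [] := Qk k.
have mk k : (k <= m k)%N.
  elim: k => [//|k IH]; exact: leq_ltn_trans IH (mS k).
have mmono k j : (k <= j)%N -> (m k <= m j)%N.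
  elim: j => [|j IH]; first by rewrite leqn0 => /eqP ->.
  rewrite leq_eqVlt => /orP [/eqP ->//|h].
  exact: leq_trans (IH h) (ltnW (mS j)).
have Fe k : p (e k) = b0 by have [] := Ist k.
have bl k : locP (b k) by have [] := Qk k.
have b0e k : b k 0 = e k by have [_ _ _ []] := Qk k.
have b1e k : b k 1 = e k.+1 by have [_ _ _ []] := Qk k.
have bV k x : unitI x -> Vdown V (m k) (p (b k x)) by have [_ _ _ _ H] := Qk k; apply: H.
pose gs k := fun x => p (b k x).
have gl : forall k, locP (gs k) by move=> k; exact: comp_loc pc (bl k).
have g0 : forall k, gs k 0 = b0 by move=> k; rewrite /gs b0e.
have g1 : forall k, gs k 1 = b0 by move=> k; rewrite /gs b1e.
have shrink : forall W, open W -> W b0 ->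
    exists j, forall k, (j <= k)%N -> forall y, unitI y -> W (gs k y).
  move=> W oW Wb; have [n Hn] := Vb (open_nbhs_nbhs (conj oW Wb)).
  exists n => k nk y uy; apply: Hn; apply: Vdown_sub.
  apply: (@Vdown_mono _ V _ _ (leq_trans nk (mk k))); exact: bV.
pose d k := delta b0 gs k.
have dl : forall k, locP (d k).
  move=> k; have := @delta_loc _ b0 gs gl g0 g1 shrink k; exact.
have d0 : forall k, d k 0 = b0 by move=> k; exact: delta0 g0 k.
have d1 : forall k, d k 1 = b0 by move=> k; exact: delta1.
have dV : forall k x, unitI x -> Vdown V (m k) (d k x).
  move=> k x ux; apply: (delta_img (N := k)) => //.
    exact: nbhs_singleton (Vdown_nbhs Vn _).
  move=> j kj y uy; apply: (@Vdown_mono _ V _ _ (mmono _ _ kj)); exact: bV.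
have exL : forall k, exists l : RR -> E,
    [/\ locP l, l 0 = e k & forall x, unitI x -> p (l x) = d k x].
  by move=> k; apply: (lift_exists cover (dl k)); rewrite d0 Fe.
have [L HL] := choice exL.
have u1 : unitI 1 by apply/unitIP; lra.
have LO k : (O `&` U k) (L k 1).
  have [_ [_ sk]] := Ist k; have [Ll L0 Lp] := HL k.
  exact: (sk (d k) (L k) (dl k) (d0 k) (dV k) Ll L0 Lp 1 u1).
have LF k : p (L k 1) = b0 by have [_ _ Lp] := HL k; rewrite Lp // d1.
have hl1 : forall x y eps : RR, `|y - x| < eps -> `|y / 2 - x / 2| < eps.
  by move=> x y eps /normlt h; apply/normlt; lra.
have hu1 : forall x, unitI x -> unitI (x / 2).
  by move=> x /unitIP h; apply/unitIP; lra.
have hl2 : forall x y eps : RR, `|y - x| < eps -> `|(y + 1) / 2 - (x + 1) / 2| < eps.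
  by move=> x y eps /normlt h; apply/normlt; lra.
have hu2 : forall x, unitI x -> unitI ((x + 1) / 2).
  by move=> x /unitIP h; apply/unitIP; lra.
have Lstep k : L k 1 = L k.+1 1.
  have [Ll L0 Lp] := HL k.
  have [Ll' L0' Lp'] := HL k.+1.
  have nl : locP (fun x => L k (x / 2)) by exact: reparam_loc Ll hu1 hl1.
  have n0 : (fun x => L k (x / 2)) 0 = e k by rewrite /= mul0r.
  have np : forall x, unitI x -> p ((fun x => L k (x / 2)) x) = gs k x.
    move=> x ux; rewrite /= Lp; [exact (delta_half b0 gs k ux) | exact: hu1].
  have bp : forall x, unitI x -> p (b k x) = gs k x by [].
  have h1 := lift_unique cover (gl k) nl (bl k) n0 (b0e k) np bp u1.
  rewrite /= b1e in h1.
  have ml : locP (fun x => L k ((x + 1) / 2)) by exact: reparam_loc Ll hu2 hl2.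
  have m0' : (fun x => L k ((x + 1) / 2)) 0 = e k.+1 by rewrite /= add0r.
  have mp : forall x, unitI x -> p ((fun x => L k ((x + 1) / 2)) x) = d k.+1 x.
    move=> x ux; rewrite /= Lp; [exact (delta_half2 g0 g1 k ux) | exact: hu2].
  have h2 := lift_unique cover (dl k.+1) ml Ll' m0' L0' mp Lp' u1.
  rewrite /= in h2; rewrite -h2; congr (L k _); lra.
have Lall k : L k 1 = L 0%N 1.
  by elim: k => [//|k IH]; rewrite -Lstep.
exists (L 0%N 1); split; first by have [] := LO 0%N.
move=> n _; rewrite -(Lall n); split; [by have [] := LO n | exact: LF].
Qed.

End Main.

Unset Implicit Arguments.

Theorem proposition3p11 (E B : topologicalType) (p : E -> B) (b0 : B) :
  continuous p -> arc_hedgehog_covering p -> peano_space E ->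
  countable_nbhs_basis b0 ->
  baire_subspace (p @^-1` [set b0]).
Proof.
move=> pc cover peano [V [Vn Vb]] U oU dU O oO OF.
exact: (main_baire pc cover Vn Vb peano oO oU dU OF).
Qed.
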